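(* Let $\Phi(z)\in K(z)$ have degree $d\ge2$ and put $B_0=B_0(\Phi)$. Assume $\Phi(0)=0$ and $\Phi$ has no poles in $D(0,B_0)^-$, so that $\Phi(D(0,B_0)^-)=D(0,f_\Phi(B_0))^-$, where $f_\Phi(r)=\mathrm{diam}_\infty(\Phi(\zeta_{0,r}))$ (increasing for $0\le r\le B_0$). Suppose $\Phi$ has $n\ge1$ zeros in $D(0,B_0)^-$ and $m\ge0$ poles in $D(0,1)^-\setminus D(0,B_0)^-$, counted with multiplicity. Then $$f_\Phi(B_0)\le\frac{B_0^{\,n-m}}{\mathrm{GIR}(\Phi)}.$$
   Context: $K$ is a complete, algebraically closed field with a nontrivial nonarchimedean absolute value. $D(a,r)^-=\{z\in K:|z-a|<r\}$. Fix $q>1$. $\mathbf P^1_{\mathrm{Berk}}$ is the Berkovich projective line over $K$ (tree containing $\mathbf P^1(K)$); $\zeta_{a,r}$ is the point of $D(a,r)=\{|z-a|\le r\}$, $\zeta_{a,0}=a$, $\zeta_G=\zeta_{0,1}$; $[x,y]$ unique path, $(x,y]$ half-open. $\mathrm{diam}_\infty(\zeta_{a,r})=r$ for $a\in K$, $r\ge0$. $\rho$ is the logarithmic path metric on $\mathbf H^1=\mathbf P^1_{\mathrm{Berk}}\setminus\mathbf P^1(K)$; $\mathrm{diam}_G(x)=q^{-\rho(\zeta_G,x)}$, explicitly $\mathrm{diam}_G(\zeta_{a,r})=r/\max(1,|a|,r)^2$. $\mathrm{GIR}(\Phi)=\mathrm{diam}_G(\Phi(\zeta_G))$. For $a\in\mathbf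 P^1(K)$, $0<r<1$, $Q_{a,r}$ is the point of $[a,\zeta_G]$ with $\mathrm{diam}_G=r$, $\mathcal B(a,r)^-=\{x:Q_{a,r}\in(x,\zeta_G]\}$, $\mathcal B(a,1)^-=\bigcup_{r<1}\mathcal B(a,r)^-$; $B_0(\Phi)=\sup\{0<r\le1:\Phi(\mathcal B(a,r)^-)\ne\mathbf P^1_{\mathrm{Berk}}\ \forall a\in\mathbf P^1(K)\}$. *)

(* Defs.v *)
From HB Require Import structures.
From mathcomp Require Import all_boot all_order all_algebra.
From Stdlib Require Import Reals ClassicalEpsilon.
Set Implicit Arguments. Unset Strict Implicit. Unset Printing Implicit Defensive.
Import GRing.Theory.
Local Open Scope ring_scope.

Definition is_glb_R (E : R -> Prop) (m : R) : Prop :=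
  (forall x, E x -> Rle m x) /\ (forall b, (forall x, E x -> Rle b x) -> Rle b m).
Definition Rinf (E : R -> Prop) : R := epsilon (inhabits R0) (is_glb_R E).
Definition Rsup (E : R -> Prop) : R := epsilon (inhabits R0) (is_lub E).

Definition asbool (P : Prop) : bool :=
  if excluded_middle_informative P then true else false.

Record nonarch_abs (K : fieldType) (abs : K -> R) : Prop := {
  abs_eq0 : forall x : K, abs x = R0 <-> x = 0;
  abs_mul : forall x y : K, abs (x * y) = Rmult (abs x) (abs y);
  abs_ultra : forall x y : K, Rle (abs (x + y)) (Rmax (abs x) (abs y));
  abs_nontriv : exists x : K, abs x <> R0 /\ abs x <> R1;
  abs_complete : forall u : nat -> K,
     (forall eps, Rlt R0 eps -> exists N : nat, forall p q : nat,
         leq N p -> leq N q -> Rlt (abs (u p - u q)) eps) ->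
     exists l : K, forall eps, Rlt R0 eps -> exists N : nat, forall p : nat,
         leq N p -> Rlt (abs (u p - l)) eps }.

Section Berkovich.
Variables (K : closedFieldType) (abs : K -> R).

(* Points of the Berkovich affine line: multiplicative seminorms on K[T]
   extending abs.  P^1_Berk = option of these, None standing for infinity. *)
Definition is_berk_seminorm (s : {poly K} -> R) : Prop :=
  (forall c : K, s c%:P = abs c) /\
  (forall f g, s (f * g) = Rmult (s f) (s g)) /\
  (forall f g, Rle (s (f + g)) (Rplus (s f) (s g))).

Definition berk := option ({poly K} -> R).

Definition is_berk (x : berk) : Prop :=
  match x with None => True | Some s => is_berk_seminorm s end.

(* zeta_{a,r} : sup norm on D(a,r) = max_i |c_i| r^i, c_i Taylor coeffs at a *)
Definition zeta_sn (a : K) (r : R) (f : {poly K}) : R :=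
  let g := f \Po ('X + a%:P) in
  foldr (fun i acc => Rmax (Rmult (abs g`_i) (pow r i)) acc) R0
        (iota 0 (size g)).
Definition zeta (a : K) (r : R) : berk := Some (zeta_sn a r).
Definition zetaG : berk := zeta 0 R1.
Definition classical (a : option K) : berk :=
  match a with None => None | Some a => zeta a R0 end.

Definition berk_le (x y : berk) : Prop :=
  match y with
  | None => True
  | Some t => match x with None => False | Some s => forall f, Rle (s f) (t f) end
  end.

Definition in_seg (x y z : berk) : Prop :=
  (berk_le x z \/ berk_le y z) /\
  forall w, is_berk w -> berk_le x w -> berk_le y w -> berk_le z w.

Definition diam_inf (x : berk) : R :=
  match x with
  | None => R0   (* not used: infinity has no finite diameter *)
  | Some s => Rinf (fun v => exists a : K, v = s ('X - a%:P))
  end.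
Definition diam_G (x : berk) : R :=
  match x with
  | None => R0
  | Some s => Rdiv (diam_inf x) (Rsqr (Rmax R1 (s 'X)))
  end.

(* B(a,r)^- = { x : Q_{a,r} in (x, zeta_G] } with Q_{a,r} the point of
   [a, zeta_G] of diam_G equal to r; B(a,1)^- is the union over r<1. *)
Definition open_ball_lt1 (a : option K) (r : R) (x : berk) : Prop :=
  exists Qp, is_berk Qp /\ in_seg (classical a) zetaG Qp /\ diam_G Qp = r /\
             in_seg x zetaG Qp /\ Qp <> x.
Definition open_ball (a : option K) (r : R) (x : berk) : Prop :=
  (Rlt r R1 /\ open_ball_lt1 a r x) \/
  (r = R1 /\ exists r', Rlt R0 r' /\ Rlt r' R1 /\ open_ball_lt1 a r' x).

(* Action of Phi = P/Q (P, Q coprime) on P^1_Berk. *)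
Definition homog (P Q g : {poly K}) : {poly K} :=
  \sum_(i < size g) g`_i *: (P ^+ i * Q ^+ ((size g).-1 - i)).

Definition push (P Q : {poly K}) (x : berk) : berk :=
  match x with
  | None =>
      if leq (size Q).+1 (size P) then None
      else if size P == size Q then classical (Some (lead_coef P / lead_coef Q))
      else classical (Some 0)
  | Some s =>
      if asbool (s Q = R0) then None
      else Some (fun g => Rdiv (s (homog P Q g)) (pow (s Q) (size g).-1))
  end.

Definition B0 (P Q : {poly K}) : R :=
  Rsup (fun r => Rlt R0 r /\ Rle r R1 /\
        forall a : option K,
          ~ (forall y, is_berk y ->
               exists x, is_berk x /\ open_ball a r x /\ push P Q x = y)).

Definition fPhi (P Q : {poly K}) (r : R) : R := diam_inf (push P Q (zeta 0 r)).
Definition GIR (P Q : {poly K}) : R := diam_G (push P Q zetaG).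

Definition nroots_in (p : {poly K}) (S : K -> Prop) (n : nat) : Prop :=
  exists (c : K) (rs : seq K),
    p = c *: \prod_(r <- rs) ('X - r%:P) /\ n = count (fun r => asbool (S r)) rs.

End Berkovich.

(* Main.v *)
Require Import Defs.
From HB Require Import structures.
From mathcomp Require Import all_boot all_order all_algebra.
From Stdlib Require Import Reals ClassicalEpsilon Lra FunctionalExtensionality PropExtensionality.
Import GRing.Theory.

Section RealAux.
Open Scope R_scope.
Lemma final_real b c p1 q1 pn pm D1 fp :
 Rlt R0 pm -> Rlt R0 q1 -> Rle R0 p1 -> Rle R0 pn -> Rle R0 b -> Rle (Rmult pm q1) c ->
 Rle b (Rmult pn p1) -> Rle fp (Rdiv b c) -> Rlt R0 D1 -> Rle D1 (Rdiv p1 q1) ->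
 Rle fp (Rmult (Rmult pn (Rinv pm)) (Rinv (Rdiv D1 (Rsqr (Rmax R1 (Rdiv p1 q1)))))).
Proof.
move=> hpm hq1 hp1 hpn hb hc hbp hfp hD1 hD1M.
set M := Rdiv p1 q1 in hD1M *.
have hM : Rle R0 M by apply: Rmult_le_pos => //; apply: Rlt_le; apply: Rinv_0_lt_compat.
set mx := Rmax R1 M.
have hmx1 : Rle R1 mx := Rmax_l R1 M. have hmxM : Rle M mx := Rmax_r R1 M.
have hc0 : Rlt R0 c by apply: Rlt_le_trans hc; apply: Rmult_lt_0_compat.
have e1 : Rle (Rdiv b c) (Rmult (Rdiv pn pm) M).
  have -> : Rmult (Rdiv pn pm) M = Rdiv (Rmult pn p1) (Rmult pm q1) by rewrite /M; field; lra.
  apply: Rle_trans (_ : Rle (Rdiv b (Rmult pm q1)) _).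
    rewrite /Rdiv; apply: Rmult_le_compat_l => //.
    apply: Rinv_le_contravar => //; apply: Rmult_lt_0_compat => //.
  rewrite /Rdiv; apply: Rmult_le_compat_r => //.
  apply: Rlt_le; apply: Rinv_0_lt_compat; apply: Rmult_lt_0_compat => //.
have e2 : Rle M (Rdiv (Rsqr mx) D1).
  have h : Rle (Rmult M D1) (Rsqr mx).
    rewrite /Rsqr; apply: Rle_trans (_ : Rle (Rmult M M) _).
      by apply: Rmult_le_compat_l.
    by apply: Rmult_le_compat.
  have -> : M = Rdiv (Rmult M D1) D1 by field; lra.
  rewrite /Rdiv; apply: Rmult_le_compat_r => //.
  by apply: Rlt_le; apply: Rinv_0_lt_compat.
have hmx0 : Rlt R0 (Rsqr mx) by rewrite /Rsqr; apply: Rmult_lt_0_compat; lra.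
have -> : Rinv (Rdiv D1 (Rsqr mx)) = Rdiv (Rsqr mx) D1 by field; lra.
apply: Rle_trans hfp _; apply: Rle_trans e1 _.
rewrite /Rdiv; apply: Rmult_le_compat_l; last by [].
apply: Rmult_le_pos => //; apply: Rlt_le; apply: Rinv_0_lt_compat => //.
Qed.

Lemma Rinf_ext (E1 E2 : R -> Prop) : (forall v, E1 v <-> E2 v) -> Rinf E1 = Rinf E2.
Proof. by move=> h; f_equal; apply: functional_extensionality => v; apply: propositional_extensionality. Qed.
Lemma glb_exists (E : R -> Prop) : (exists x, E x) -> (exists m, forall x, E x -> Rle m x) ->
  exists g, is_glb_R E g.
Proof.
move=> [x Ex] [m Hm].
have hb : bound (fun y => E (Ropp y)).
  exists (Ropp m) => y Ey; have := Hm _ Ey; lra.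
have hne : exists y, E (Ropp y) by exists (Ropp x); rewrite Ropp_involutive.
case: (completeness _ hb hne) => l [Hl1 Hl2].
exists (Ropp l); split.
  move=> y Ey; have : Rle (Ropp y) l by apply: Hl1; rewrite Ropp_involutive.
  lra.
move=> b Hb; have : Rle l (Ropp b).
  by apply: Hl2 => y Ey; have := Hb _ Ey; lra.
lra.
Qed.

Lemma Rinf_spec (E : R -> Prop) : (exists x, E x) -> (exists m, forall x, E x -> Rle m x) ->
  is_glb_R E (Rinf E).
Proof. by move=> h1 h2; apply: epsilon_spec; apply: glb_exists. Qed.
End RealAux.

Local Open Scope ring_scope.

Lemma Rmax_cases a b : (Rmax a b = a /\ Rle b a) \/ (Rmax a b = b /\ Rle a b).
Proof.
case: (Rle_dec b a) => h; [left; split=> //; exact: Rmax_left|].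
right; have h' : Rle a b by apply: Rlt_le; apply: Rnot_le_lt.
by split=> //; apply: Rmax_right.
Qed.

Section Fold.
Variable t : nat -> R.
Hypothesis t0 : forall i, Rle R0 (t i).
Definition Ffold (l : seq nat) := foldr (fun i acc => Rmax (t i) acc) R0 l.
Lemma Ffold_ge0 l : Rle R0 (Ffold l).
Proof. elim: l => [|a l IH] /=; first lra. apply: Rle_trans IH (Rmax_r _ _). Qed.
Lemma Ffold_ub l i : i \in l -> Rle (t i) (Ffold l).
Proof.
elim: l => [|a l IH] //=; rewrite in_cons => /orP [/eqP->|H].
  exact: Rmax_l.
apply: Rle_trans (IH H) (Rmax_r _ _).
Qed.
Lemma Ffold_att l : Ffold l = R0 \/ exists i, i \in l /\ Ffold l = t i.
Proof.
elim: l => [|a l IH] /=; first by left.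
case: (Rmax_cases (t a) (Ffold l)) => [[-> _]|[-> _]].
  by right; exists a; rewrite in_cons eqxx.
case: IH => [->|[i [Hi ->]]]; first by left.
by right; exists i; rewrite in_cons Hi orbT.
Qed.
End Fold.


Section Main.
Variables (K : closedFieldType) (abs : K -> R) (habs : nonarch_abs abs).

Lemma abs0 : abs 0 = R0.
Proof. by apply (abs_eq0 habs). Qed.

Lemma abs_ge0 x : Rle R0 (abs x).
Proof.
have [s Hs] := @solve_monicpoly K 2 (nth 0 [:: x]) isT.
move: Hs; rewrite !big_ord_recl big_ord0 /= mulr1 mul0r !addr0 => Hs.
have : abs x = Rmult (abs s) (abs s) by rewrite -Hs expr2 (abs_mul habs).
move=> ->; nra.
Qed.

Lemma abs1 : abs 1 = R1.
Proof.
have h : abs 1 = Rmult (abs 1) (abs 1) by rewrite -(abs_mul habs) mulr1.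
have h1 : abs 1 <> R0 by move=> /(abs_eq0 habs) /eqP; rewrite oner_eq0.
have h2 : Rmult (abs 1) (Rminus (abs 1) R1) = R0 by rewrite Rmult_minus_distr_l -h; ring.
case: (Rmult_integral _ _ h2) => //; lra.
Qed.

Lemma absN1 : abs (-1) = R1.
Proof.
have h : Rmult (abs (-1)) (abs (-1)) = R1 by rewrite -(abs_mul habs) mulrNN mulr1 abs1.
have := abs_ge0 (-1) => h0.
have h2 : Rmult (Rminus (abs (-1)) R1) (Rplus (abs (-1)) R1) = R0 by rewrite -[R0](Rminus_diag_eq _ _ h); ring.
case: (Rmult_integral _ _ h2); lra.
Qed.

Lemma absN x : abs (- x) = abs x.
Proof. by rewrite -mulN1r (abs_mul habs) absN1 Rmult_1_l. Qed.

Lemma abs_strict x y : Rlt (abs y) (abs x) -> abs (x + y) = abs x.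
Proof.
move=> h.
have h1 := abs_ultra habs x y.
have h2 := abs_ultra habs (x + y) (- y).
rewrite addrK absN in h2.
rewrite Rmax_left in h1; last lra.
have h0 := abs_ge0 (x + y).
move: h2; case: (Rle_dec (abs (x + y)) (abs y)) => c.
  rewrite Rmax_right //; lra.
move/Rnot_le_lt: c => c; rewrite Rmax_left; [move=> ?; apply Rle_antisym; assumption| apply Rlt_le; assumption].
Qed.

Lemma abs_sub_strict x y : Rlt (abs y) (abs x) -> abs (x - y) = abs x.
Proof. by move=> h; apply: abs_strict; rewrite absN. Qed.

Definition tc (r : R) (f : {poly K}) i := Rmult (abs f`_i) (pow r i).
Definition GN (r : R) (f : {poly K}) := zeta_sn abs 0 r f.

Lemma GN_def r f : GN r f = Ffold (tc r f) (iota 0 (size f)).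
Proof. by rewrite /GN /zeta_sn polyC0 addr0 comp_polyXr. Qed.

Lemma tc_ge0 r f i : Rle R0 r -> Rle R0 (tc r f i).
Proof. move=> hr; apply: Rmult_le_pos; [exact: abs_ge0|exact: pow_le]. Qed.

Lemma GN_ge0 r f : Rle R0 r -> Rle R0 (GN r f).
Proof. by move=> hr; rewrite GN_def; apply: Ffold_ge0 => i; apply: tc_ge0. Qed.

Lemma GN_ub r f i : Rle R0 r -> Rle (tc r f i) (GN r f).
Proof.
move=> hr; case: (ltnP i (size f)) => hi.
  rewrite GN_def; apply: (Ffold_ub (tc r f)).
  by rewrite mem_iota add0n.
rewrite /tc nth_default // abs0 // Rmult_0_l; exact: GN_ge0.
Qed.

Lemma GN_att r f : GN r f = R0 \/ exists i, GN r f = tc r f i.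
Proof.
rewrite GN_def; case: (Ffold_att (tc r f) (iota 0 (size f))) => [->|[i [_ ->]]].
  by left.
by right; exists i.
Qed.

Lemma GN_unique r f X : Rle R0 r -> (forall i, Rle (tc r f i) X) ->
  (X = R0 \/ exists i, X = tc r f i) -> X = GN r f.
Proof.
move=> hr hub hat; apply: Rle_antisym.
  case: hat => [->|[i ->]]; [exact: GN_ge0|exact: GN_ub].
case: (GN_att r f) => [->|[i ->]]; last exact: hub.
apply: Rle_trans (hub 0%N); exact: tc_ge0.
Qed.

Lemma GN_scale r c (f : {poly K}) : Rle R0 r -> GN r (c *: f) = Rmult (abs c) (GN r f).
Proof.
move=> hr; symmetry; apply: GN_unique => //.
  move=> i; rewrite /tc coefZ (abs_mul habs) Rmult_assoc.
  apply: Rmult_le_compat_l; first exact: abs_ge0.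
  exact: (GN_ub).
case: (GN_att r f) => [->|[i ->]]; first by left; ring.
by right; exists i; rewrite /tc coefZ (abs_mul habs) Rmult_assoc.
Qed.

Lemma coef_lin (f : {poly K}) b i :
  (f * ('X - b%:P))`_i = (if i == 0%N then 0 else f`_i.-1) - f`_i * b.
Proof. by rewrite mulrBr coefB coefMX coefMC. Qed.

Lemma abs_sub_strict' x y : Rlt (abs x) (abs y) -> abs (x - y) = abs y.
Proof.
by move=> h; rewrite -(absN (x - y)) opprB; apply: (abs_sub_strict).
Qed.

Lemma asboolT (P : Prop) : P -> asbool P = true.
Proof. by rewrite /asbool; case: excluded_middle_informative. Qed.
Lemma asboolP (P : Prop) : asbool P = true -> P.
Proof. by rewrite /asbool; case: excluded_middle_informative. Qed.
Lemma asboolF (P : Prop) : ~ P -> asbool P = false.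
Proof. by rewrite /asbool; case: excluded_middle_informative. Qed.

Lemma GN_lin r (f : {poly K}) b : Rlt R0 r ->
  GN r (f * ('X - b%:P)) = Rmult (GN r f) (Rmax (abs b) r).
Proof.
move=> hr; have hr' : Rle R0 r by lra.
set M := GN r f.
have hM0 : Rle R0 M by exact: (GN_ge0).
have hbb := abs_ge0 b.
have hmx1 := Rmax_l (abs b) r; have hmx2 := Rmax_r (abs b) r.
symmetry; apply: GN_unique => //.
  move=> i; rewrite /tc coef_lin.
  case: i => [|k] /=.
    rewrite sub0r absN (abs_mul habs) Rmult_1_r.
    have := GN_ub r f 0 hr'; rewrite /tc /= Rmult_1_r -/M => h0.
    have := abs_ge0 f`_0 => ha.
    apply: Rle_trans (Rmult_le_compat_r _ _ _ hbb h0) _.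
    exact: Rmult_le_compat_l.
  have hu := abs_ultra habs f`_k (- (f`_k.+1 * b)).
  rewrite absN (abs_mul habs) in hu.
  have hA := GN_ub r f k hr'; have hB := GN_ub r f k.+1 hr'.
  rewrite /tc -/M /= in hA hB.
  have hpk := pow_le r k hr'.
  have hak := abs_ge0 f`_k; have hak1 := abs_ge0 f`_k.+1.
  have hh := abs_ge0 (f`_k - f`_k.+1 * b).
  move: hu; set h := abs (f`_k - f`_k.+1 * b) => hu.
  set A := abs f`_k in hA hu hak *; set Bc := abs f`_k.+1 in hB hu hak1 *.
  set p := pow r k in hA hB hpk *.
  set mx := Rmax (abs b) r in hmx1 hmx2 *.
  case: (Rmax_cases A (Rmult Bc (abs b))) => [[E _]|[E _]]; rewrite E in hu.
  -
    apply: Rle_trans (_ : Rle (Rmult A (Rmult r p)) _).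
      by apply: Rmult_le_compat_r => //; apply: Rmult_le_pos.
    have : Rle (Rmult (Rmult A p) r) (Rmult M r) by apply: Rmult_le_compat_r.
    move=> H1; have : Rle (Rmult M r) (Rmult M mx) by apply: Rmult_le_compat_l.
    move=> H2; rewrite -Rmult_assoc (Rmult_comm A r) Rmult_assoc (Rmult_comm r) .
    by apply: Rle_trans H1 H2.
  - apply: Rle_trans (_ : Rle (Rmult (Rmult Bc (abs b)) (Rmult r p)) _).
      by apply: Rmult_le_compat_r => //; apply: Rmult_le_pos.
    have : Rle (Rmult (Rmult Bc (Rmult r p)) (abs b)) (Rmult M (abs b)).
      by apply: Rmult_le_compat_r.
    move=> H1; have : Rle (Rmult M (abs b)) (Rmult M mx) by apply: Rmult_le_compat_l.
    move=> H2; apply: Rle_trans H2; apply: Rle_trans H1; right; ring.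
case: (GN_att r f) => [E0|[i0 Ei0]].
  by left; rewrite -/M in E0; rewrite E0 Rmult_0_l.
rewrite -/M in Ei0.
case: (Req_dec_T M R0) => [E0|MnZ].
  by left; rewrite E0 Rmult_0_l.
right.
have hMp : Rlt R0 M by lra.
have hpow := fun k => pow_lt r k hr.
case: (Rle_dec (abs b) r) => hbr.
-
  rewrite Rmax_right //.
  have exP : exists i, (fun j => asbool (tc r f j = M)) i by exists i0; apply: asboolT.
  have ubP : forall i, (fun j => asbool (tc r f j = M)) i -> leq i (size f).
    move=> i /asboolP Ei; case: (ltnP (size f) i) => // hi.
    exfalso; move: Ei; rewrite /tc nth_default ?abs0 ?Rmult_0_l; [lra|].
    exact: ltnW.
  case: (ex_maxnP exP ubP) => j /asboolP Ej jmax.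
  have Ej1 : tc r f j.+1 <> M.
    by move=> E; have := jmax j.+1 (asboolT _ E); rewrite ltnn.
  have Hle := GN_ub r f j.+1 hr'; rewrite -/M in Hle.
  have Hlt : Rlt (tc r f j.+1) M by case: Hle.
  exists j.+1; rewrite /tc coef_lin /=.
  have hfj := abs_ge0 f`_j; have hfj1 := abs_ge0 f`_j.+1.
  rewrite /tc in Ej Hlt.
  have key : Rlt (abs (f`_j.+1 * b)) (abs f`_j).
    rewrite (abs_mul habs).
    have h1 : Rlt (Rmult (abs f`_j.+1) r) (abs f`_j).
      apply: (Rmult_lt_reg_r (pow r j)) => //.
      rewrite Ej; move: Hlt; rewrite /= Rmult_assoc (Rmult_comm r); done.
    apply: Rle_lt_trans h1; exact: Rmult_le_compat_l.
  rewrite abs_sub_strict // -Ej /= ; ring.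
-
  have hbr' : Rlt r (abs b) by apply: Rnot_le_lt.
  rewrite Rmax_left; last lra.
  have exP : exists i, (fun j => asbool (tc r f j = M)) i by exists i0; apply: asboolT.
  case: (ex_minnP exP) => j /asboolP Ej jmin.
  exists j; rewrite /tc coef_lin.
  rewrite /tc in Ej.
  have hfjpos : Rlt R0 (abs f`_j).
    case: (abs_ge0 f`_j) => // E; rewrite -E Rmult_0_l in Ej; lra.
  case: j Ej jmin hfjpos => [|k] Ej jmin hfjpos /=.
    rewrite sub0r absN (abs_mul habs) -Ej /=; ring.
  have Ek : tc r f k <> M.
    by move=> E; have := jmin k (asboolT _ E); rewrite ltnn.
  have Hle := GN_ub r f k hr'; rewrite -/M in Hle.
  have Hlt : Rlt (tc r f k) M by case: Hle.
  rewrite /tc in Hlt.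
  have key : Rlt (abs f`_k) (abs (f`_k.+1 * b)).
    rewrite (abs_mul habs).
    have h1 : Rlt (abs f`_k) (Rmult (abs f`_k.+1) r).
      apply: (Rmult_lt_reg_r (pow r k)) => //.
      have Ej' : Rmult (Rmult (abs f`_k.+1) r) (pow r k) = M by rewrite -Ej /=; ring.
      by rewrite Ej'.
    apply: Rlt_le_trans h1 _; apply: Rmult_le_compat_l; lra.
  rewrite abs_sub_strict' // (abs_mul habs) -Ej /=; ring.
Qed.


Lemma GN_one r : Rle R0 r -> GN r 1 = R1.
Proof.
move=> hr; symmetry; apply: GN_unique => //.
  move=> i; rewrite /tc coef1; case: i => [|k] /=; first by rewrite abs1; lra.
  rewrite abs0 Rmult_0_l; lra.
by right; exists 0%N; rewrite /tc coef1 /= abs1; ring.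
Qed.

Definition rprod r (rs : seq K) := foldr (fun q acc => Rmult (Rmax (abs q) r) acc) R1 rs.

Lemma GN_prod r rs : Rlt R0 r -> GN r (\prod_(q <- rs) ('X - q%:P)) = rprod r rs.
Proof.
move=> hr; elim: rs => [|q rs IH] /=.
  by rewrite big_nil GN_one //; lra.
by rewrite big_cons mulrC GN_lin // IH Rmult_comm.
Qed.

Lemma GN_fact r c rs : Rlt R0 r ->
  GN r (c *: \prod_(q <- rs) ('X - q%:P)) = Rmult (abs c) (rprod r rs).
Proof. by move=> hr; rewrite GN_scale ?GN_prod //; lra. Qed.

Lemma rprod_ge0 r rs : Rle R0 r -> Rle R0 (rprod r rs).
Proof.
move=> hr; elim: rs => [|q rs IH] /=; first lra.
apply: Rmult_le_pos => //; apply: Rle_trans hr (Rmax_r _ _).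
Qed.

Lemma rprod_P B rs : Rlt R0 B ->
  Rle (rprod B rs) (Rmult (pow B (count (fun q => asbool (Rlt (abs q) B)) rs)) (rprod R1 rs)).
Proof.
move=> hB; elim: rs => [|q rs IH] /=; first lra.
have h1 := rprod_ge0 B rs (Rlt_le _ _ hB).
have h1' := rprod_ge0 R1 rs Rle_0_1.
have hq := abs_ge0 q.
have hp := pow_le B (count (fun q => asbool (Rlt (abs q) B)) rs) (Rlt_le _ _ hB).
move: IH h1 h1' hp.
set c := count _ rs; set P1 := rprod B rs; set P2 := rprod R1 rs; set pc := pow B c.
move=> IH h1 h1' hp.
case: (Rlt_dec (abs q) B) => hqB.
  rewrite (asboolT _ hqB) /= Rmax_right; last lra.
  have hm := Rmax_r (abs q) R1.
  rewrite add0n -/pc.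
  have e1 : Rle (Rmult pc P2) (Rmult (Rmax (abs q) R1) (Rmult pc P2)).
    rewrite -{1}(Rmult_1_l (Rmult pc P2)); apply: Rmult_le_compat_r => //.
    exact: Rmult_le_pos.
  have e2 : Rle P1 (Rmult (Rmax (abs q) R1) (Rmult pc P2)) by apply: Rle_trans e1.
  have e3 := Rmult_le_compat_l _ _ _ (Rlt_le _ _ hB) e2.
  apply: Rle_trans e3 _; right; ring.
have hqB' : Rle B (abs q) by apply: Rnot_lt_le.
rewrite (asboolF _ hqB) /= add0n Rmax_left //.
have hm := Rmax_l (abs q) R1.
have e1 : Rle (Rmult (abs q) P1) (Rmult (abs q) (Rmult pc P2)) by apply: Rmult_le_compat_l.
have e2 : Rle (Rmult (abs q) (Rmult pc P2)) (Rmult (Rmax (abs q) R1) (Rmult pc P2)).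
  by apply: Rmult_le_compat_r => //; apply: Rmult_le_pos.
apply: Rle_trans e1 _; apply: Rle_trans e2 _; right; rewrite /pc; ring.
Qed.


Lemma rprod_Q B rs : Rlt R0 B -> (forall q, q \in rs -> Rle B (abs q)) ->
  Rle (Rmult (pow B (count (fun q => asbool (Rle B (abs q) /\ Rlt (abs q) R1)) rs)) (rprod R1 rs))
      (rprod B rs).
Proof.
move=> hB; elim: rs => [|q rs IH] hin /=; first lra.
have hqB : Rle B (abs q) by apply: hin; rewrite in_cons eqxx.
have hin' : forall q, q \in rs -> Rle B (abs q).
  by move=> x hx; apply: hin; rewrite in_cons hx orbT.
have {}IH := IH hin'.
have h1 := rprod_ge0 B rs (Rlt_le _ _ hB).
have h1' := rprod_ge0 R1 rs Rle_0_1.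
have hp := pow_le B (count (fun q => asbool (Rle B (abs q) /\ Rlt (abs q) R1)) rs) (Rlt_le _ _ hB).
move: IH h1 h1' hp.
set c := count _ rs; set P1 := rprod B rs; set P2 := rprod R1 rs; set pc := pow B c.
move=> IH h1 h1' hp.
rewrite (Rmax_left (abs q) B) //.
case: (Rlt_dec (abs q) R1) => hq1.
  rewrite (asboolT _ (conj hqB hq1)) /= add0n -/pc Rmax_right; last lra.
  have e1 := Rmult_le_compat _ _ _ _ (Rlt_le _ _ hB) (Rmult_le_pos _ _ hp h1') hqB IH.
  apply: Rle_trans e1; right; ring.
have hq1' : Rle R1 (abs q) by apply: Rnot_lt_le.
have hF : ~ (Rle B (abs q) /\ Rlt (abs q) R1) by case.
rewrite (asboolF _ hF) /= add0n -/pc Rmax_left //.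
have e1 := Rmult_le_compat_l _ _ _ (abs_ge0 q) IH.
apply: Rle_trans e1; right; ring.
Qed.


Lemma homog_lin (P Q : {poly K}) a : homog P Q ('X - a%:P) = P - a *: Q.
Proof.
rewrite /homog size_XsubC !big_ord_recl big_ord0 /= !coefB !coefX !coefC /=.
by rewrite sub0r subr0 expr0 expr1 mul1r mulr1 scaleNr scale1r addr0 addrC.
Qed.

Lemma homog_X (P Q : {poly K}) : homog P Q 'X = P.
Proof. by have := homog_lin P Q 0; rewrite polyC0 subr0 scale0r subr0. Qed.

Lemma push_zeta (P Q : {poly K}) r : GN r Q <> R0 ->
  push abs P Q (zeta abs 0 r) = Some (fun g => Rdiv (GN r (homog P Q g)) (pow (GN r Q) (size g).-1)).
Proof. by move=> h; rewrite /push /zeta (asboolF _ h). Qed.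

Lemma GN_pos r (Q : {poly K}) : Rlt R0 r -> Q != 0 -> Rlt R0 (GN r Q).
Proof.
move=> hr hQ.
have h := GN_ub r Q (size Q).-1 (Rlt_le _ _ hr).
apply: Rlt_le_trans h; rewrite /tc.
apply: Rmult_lt_0_compat; last exact: pow_lt.
case: (abs_ge0 Q`_(size Q).-1) => // E.
exfalso; move/esym: E => /(abs_eq0 habs) /eqP.
by rewrite -/(lead_coef Q) lead_coef_eq0 (negbTE hQ).
Qed.


Lemma det_ident (pk pj qk lc a : K) :
  (pk - a * qk) * lc - (pj - a * lc) * qk = pk * lc - pj * qk.
Proof. by rewrite !mulrBl -!mulrA (mulrC lc qk) opprB addrA subrK. Qed.

Lemma det_exists (P Q : {poly K}) : coprimep P Q -> Q != 0 ->
  leq 2 (maxn (size P).-1 (size Q).-1) ->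
  exists k, P`_k * lead_coef Q - P`_((size Q).-1) * Q`_k != 0.
Proof.
move=> hc hQ hd.
case: (classic (exists k, P`_k * lead_coef Q - P`_((size Q).-1) * Q`_k != 0)) => // hn.
exfalso.
have hl : lead_coef Q != 0 by rewrite lead_coef_eq0.
have hP : P = (P`_((size Q).-1) / lead_coef Q) *: Q.
  apply/polyP => k; rewrite coefZ.
  have : P`_k * lead_coef Q - P`_((size Q).-1) * Q`_k = 0.
    by apply/eqP; apply/negPn/negP => h; apply: hn; exists k.
  move/eqP; rewrite subr_eq0 => /eqP e.
  by apply: (mulIf hl); rewrite e mulrAC divfK.
have hQ1 : size Q = 1%N.
  move/coprimepP: hc => /(_ Q) h.
  have : Q %= 1 by apply: h; [rewrite hP -mul_polyC; apply: dvdp_mull; apply: dvdpp|apply: dvdpp].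
  by move/eqp_size; rewrite size_poly1.
have hP1 : leq (size P) 1.
  by have := size_scale_leq (P`_((size Q).-1) / lead_coef Q) Q; rewrite -hP hQ1.
move: hd; rewrite hQ1 /=.
by case: (size P) hP1 => [|[|]].
Qed.

Lemma det_bound (P Q : {poly K}) k a :
  Rle (abs (P`_k * lead_coef Q - P`_((size Q).-1) * Q`_k))
      (Rmult (GN R1 (P - a *: Q)) (Rmax (abs (lead_coef Q)) (abs Q`_k))).
Proof.
have hx := GN_ub R1 (P - a *: Q) k Rle_0_1.
have hy := GN_ub R1 (P - a *: Q) (size Q).-1 Rle_0_1.
rewrite /tc pow1 Rmult_1_r coefB coefZ in hx.
rewrite /tc pow1 Rmult_1_r coefB coefZ -lead_coefE in hy.
rewrite lead_coefE -(det_ident _ _ _ _ a) -lead_coefE.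
have hu := abs_ultra habs ((P`_k - a * Q`_k) * lead_coef Q) (- ((P`_(size Q).-1 - a * lead_coef Q) * Q`_k)).
rewrite absN !(abs_mul habs) in hu.
apply: Rle_trans hu _.
set N1 := GN R1 (P - a *: Q) in hx hy *.
have h1 := abs_ge0 (lead_coef Q); have h2 := abs_ge0 Q`_k.
have h3 := Rmax_l (abs (lead_coef Q)) (abs Q`_k).
have h4 := Rmax_r (abs (lead_coef Q)) (abs Q`_k).
have hN : Rle R0 N1 by apply: GN_ge0; lra.
apply: Rmax_lub.
  apply: Rle_trans (Rmult_le_compat_r _ _ _ h1 hx) _.
  by apply: Rmult_le_compat_l.
apply: Rle_trans (Rmult_le_compat_r _ _ _ h2 hy) _.
by apply: Rmult_le_compat_l.
Qed.


Definition EE r (P Q : {poly K}) := fun v => exists a : K, v = Rdiv (GN r (P - a *: Q)) (GN r Q).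

Lemma diam_push r (P Q : {poly K}) : Rlt R0 r -> Q != 0 ->
  diam_inf (push abs P Q (zeta abs 0 r)) = Rinf (EE r P Q).
Proof.
move=> hr hQ; have hQ0 := GN_pos r Q hr hQ.
rewrite push_zeta; last lra.
rewrite /diam_inf; apply: Rinf_ext => v; split; case=> a ->; exists a;
  by rewrite homog_lin size_XsubC /= Rmult_1_r.
Qed.

Lemma GIR_eq (P Q : {poly K}) : Q != 0 ->
  GIR abs P Q = Rdiv (Rinf (EE R1 P Q)) (Rsqr (Rmax R1 (Rdiv (GN R1 P) (GN R1 Q)))).
Proof.
move=> hQ; have hQ0 := GN_pos R1 Q Rlt_0_1 hQ.
have := diam_push R1 P Q Rlt_0_1 hQ.
rewrite /GIR /zetaG push_zeta; last lra.
rewrite /diam_G => ->.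
by rewrite homog_X size_polyX /= Rmult_1_r.
Qed.

Lemma EE_spec r (P Q : {poly K}) : Rlt R0 r -> Q != 0 -> is_glb_R (EE r P Q) (Rinf (EE r P Q)).
Proof.
move=> hr hQ; have hQ0 := GN_pos r Q hr hQ.
apply: Rinf_spec; first by exists (Rdiv (GN r (P - 0 *: Q)) (GN r Q)); exists 0.
exists R0 => v [a ->]; apply: Rmult_le_pos; first by apply: GN_ge0; lra.
by apply: Rlt_le; apply: Rinv_0_lt_compat.
Qed.

Lemma main_in (P Q : {poly K}) (hcop : coprimep P Q) (hQ : Q != 0) (d : nat)
  (hd : d = maxn (size P).-1 (size Q).-1) (hd2 : leq 2 d)
  (hnopole : forall z : K, Rlt (abs z) (B0 abs P Q) -> Q.[z] <> 0)
  (n m : nat) (hn : leq 1 n)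
  (hzeros : nroots_in P (fun z => Rlt (abs z) (B0 abs P Q)) n)
  (hpoles : nroots_in Q (fun z => Rle (B0 abs P Q) (abs z) /\ Rlt (abs z) R1) m) :
  Rle (fPhi abs P Q (B0 abs P Q))
      (Rdiv (powerRZ (B0 abs P Q) (Z.of_nat n - Z.of_nat m)) (GIR abs P Q)).
Proof.
move: hnopole hzeros hpoles; set B := B0 abs P Q => hnopole hzeros hpoles.
case: hzeros => cp [rsp [hPe hnc]].
case: hpoles => cq [rsq [hQe hmc]].
have hB : Rlt R0 B.
  have : has (fun r => asbool (Rlt (abs r) B)) rsp by rewrite has_count -hnc.
  case/hasP => q _ /asboolP hq; exact: Rle_lt_trans (abs_ge0 q) hq.
have hB' : Rle R0 B by lra.
have hcq : cq != 0 by apply/eqP => e; move: hQ; rewrite hQe e scale0r eqxx.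
have hroots : forall q, q \in rsq -> Rle B (abs q).
  move=> q hq; apply: Rnot_lt_le => hlt; apply: (hnopole q hlt).
  by apply/rootP; rewrite hQe rootZ // root_prod_XsubC.
have hPB : Rle (GN B P) (Rmult (pow B n) (GN R1 P)).
  rewrite hPe !GN_fact //; last lra.
  have h := rprod_P B rsp hB; rewrite -hnc in h.
  have ha := abs_ge0 cp.
  apply: Rle_trans (Rmult_le_compat_l _ _ _ ha h) _; right; ring.
have hQB : Rle (Rmult (pow B m) (GN R1 Q)) (GN B Q).
  rewrite hQe !GN_fact //; last lra.
  have h := rprod_Q B rsq hB hroots; rewrite -hmc in h.
  have ha := abs_ge0 cq.
  apply: Rle_trans (Rmult_le_compat_l _ _ _ ha h); right; ring.
have hQ1 := GN_pos R1 Q Rlt_0_1 hQ.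
have hQBp := GN_pos B Q hB hQ.
have [glbB1 glbB2] := EE_spec B P Q hB hQ.
have [glb11 glb12] := EE_spec R1 P Q Rlt_0_1 hQ.
have hfp : Rle (fPhi abs P Q B) (Rdiv (GN B P) (GN B Q)).
  rewrite /fPhi diam_push //; apply: glbB1; exists 0; by rewrite scale0r subr0.
have hD1M : Rle (Rinf (EE R1 P Q)) (Rdiv (GN R1 P) (GN R1 Q)).
  apply: glb11; exists 0; by rewrite scale0r subr0.
have [k hk] := det_exists P Q hcop hQ ltac:(by rewrite -hd).
set D := P`_k * lead_coef Q - P`_((size Q).-1) * Q`_k in hk.
have hD : Rlt R0 (abs D).
  case: (abs_ge0 D) => // E; exfalso; move/esym: E => /(abs_eq0 habs) /eqP.
  by rewrite (negbTE hk).
set mx := Rmax (abs (lead_coef Q)) (abs Q`_k).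
have hmx : Rlt R0 mx.
  apply: Rlt_le_trans (Rmax_l _ _); case: (abs_ge0 (lead_coef Q)) => // E.
  exfalso; move/esym: E => /(abs_eq0 habs) /eqP; by rewrite lead_coef_eq0 (negbTE hQ).
have hD1 : Rlt R0 (Rinf (EE R1 P Q)).
  apply: Rlt_le_trans (glb12 (Rdiv (Rdiv (abs D) mx) (GN R1 Q)) _).
    apply: Rdiv_lt_0_compat => //; exact: Rdiv_lt_0_compat.
  move=> v [a ->]; rewrite /Rdiv; apply: Rmult_le_compat_r.
    by apply: Rlt_le; apply: Rinv_0_lt_compat.
  have h := det_bound P Q k a; rewrite -/D -/mx in h.
  apply: (Rmult_le_reg_r mx) => //.
  rewrite Rmult_assoc Rinv_l; last lra.
  by rewrite Rmult_1_r.
rewrite GIR_eq // /Z.sub powerRZ_add; last lra.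
rewrite powerRZ_neg' -!pow_powerRZ /Rdiv.
apply: (final_real (GN B P) (GN B Q)) => //.
all: first [exact: pow_lt hB | exact: pow_le | (apply: GN_ge0; lra) | assumption].
Qed.

End Main.

Theorem lemma5p5 (K : closedFieldType) (abs : K -> R) (habs : nonarch_abs abs)
  (P Q : {poly K}) (hcop : coprimep P Q) (hQ : Q != 0) (d : nat)
  (hd : d = maxn (size P).-1 (size Q).-1) (hd2 : leq 2 d)
  (hP0 : P.[0] = 0)
  (hnopole : forall z : K, Rlt (abs z) (B0 abs P Q) -> Q.[z] <> 0)
  (n m : nat) (hn : leq 1 n)
  (hzeros : nroots_in P (fun z => Rlt (abs z) (B0 abs P Q)) n)
  (hpoles : nroots_in Q (fun z => Rle (B0 abs P Q) (abs z) /\ Rlt (abs z) R1) m) :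
  Rle (fPhi abs P Q (B0 abs P Q))
      (Rdiv (powerRZ (B0 abs P Q) (Z.of_nat n - Z.of_nat m)) (GIR abs P Q)).
Proof. exact: (@main_in K abs habs P Q hcop hQ d hd hd2 hnopole n m hn hzeros hpoles). Qed.
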